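(* Let $G$ be a graph and $a\neq b$ vertices of $G$. The pair state $e_a-e_b$ is fixed if and only if $a$ and $b$ are twins in $G$, i.e. $N(a)\setminus\{b\}=N(b)\setminus\{a\}$.
   Context: $N(v)$ denotes the set of neighbours of $v$. With $L=\Delta-A$ the Laplacian of $G$ and $U(t)=\exp(itL)$, the pair state $e_a-e_b$ is fixed if for every $t\ge 0$ there is $\gamma\in\mathbb{C}$ with $|\gamma|=1$ (possibly depending on $t$) such that $U(t)(e_a-e_b)=\gamma(e_a-e_b)$. *)

(* Defs.v *)
From mathcomp Require Import all_boot all_order all_algebra complex.
From mathcomp Require Import all_classical all_reals all_analysis.
Set Implicit Arguments. Unset Strict Implicit. Unset Printing Implicit Defensive.
Import Order.TTheory GRing.Theory Num.Theory numFieldNormedType.Exports.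
Local Open Scope ring_scope.

Definition simple_graph (n : nat) (adj : rel 'I_n) : Prop :=
  symmetric adj /\ irreflexive adj.

Definition nbhd (n : nat) (adj : rel 'I_n) (v : 'I_n) : {set 'I_n} :=
  [set w | adj v w].

Definition adj_mx (R : realType) (n : nat) (adj : rel 'I_n) : 'M[R]_n :=
  \matrix_(i, j) (adj i j)%:R.
Definition deg_mx (R : realType) (n : nat) (adj : rel 'I_n) : 'M[R]_n :=
  \matrix_(i, j) (if i == j then #|nbhd adj i|%:R else 0).
Definition laplacian (R : realType) (n : nat) (adj : rel 'I_n) : 'M[R]_n :=
  deg_mx R adj - adj_mx R adj.

Definition mxpow (C : pzRingType) (n : nat) (M : 'M[C]_n) (k : nat) : 'M[C]_n :=
  iter k (mulmx M) 1%:M.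

Definition expm_partial (R : realType) (n : nat) (M : 'M[R[i]]_n) (N : nat)
  : 'M[R[i]]_n :=
  \sum_(k < N) ((k`!)%:R)^-1 *: mxpow M k.

Definition expm (R : realType) (n : nat) (M : 'M[R[i]]_n) : 'M[R[i]]_n :=
  \matrix_(i, j)
    ((limn (fun N => complex.Re (expm_partial M N i j)))
       +i* (limn (fun N => complex.Im (expm_partial M N i j))))%C.

Definition transition (R : realType) (n : nat) (adj : rel 'I_n) (t : R)
  : 'M[R[i]]_n :=
  expm ((('i : R[i]) * (t%:C)%C) *: map_mx (fun x : R => (x%:C)%C) (laplacian R adj)).

Definition evec (R : realType) (n : nat) (v : 'I_n) : 'cV[R[i]]_n :=
  delta_mx v 0.

Definition pair_fixed (R : realType) (n : nat) (adj : rel 'I_n) (a b : 'I_n)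
  : Prop :=
  forall t : R, 0 <= t ->
    exists gamma : R[i],
      (complex.Re gamma) ^+ 2 + (complex.Im gamma) ^+ 2 = 1 /\
      transition adj t *m (evec R a - evec R b) = gamma *: (evec R a - evec R b).

Definition twins (n : nat) (adj : rel 'I_n) (a b : 'I_n) : Prop :=
  nbhd adj a :\ b = nbhd adj b :\ a.

(* Main.v *)
Require Import Defs.
From mathcomp Require Import all_boot all_order all_algebra complex.
From mathcomp Require Import all_classical all_reals all_analysis.
From mathcomp Require Import ring lra.
Set Implicit Arguments. Unset Strict Implicit. Unset Printing Implicit Defensive.
Import Order.TTheory GRing.Theory Num.Theory numFieldNormedType.Exports.
Local Open Scope ring_scope.

Section Cx.
Variable R : realType.
Local Open Scope complex_scope.
Lemma ReD (x y : R[i]) : complex.Re (x + y) = complex.Re x + complex.Re y.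
Proof. by case: x; case: y. Qed.
Lemma ImD (x y : R[i]) : complex.Im (x + y) = complex.Im x + complex.Im y.
Proof. by case: x; case: y. Qed.
Lemma ReB (x y : R[i]) : complex.Re (x - y) = complex.Re x - complex.Re y.
Proof. by case: x; case: y. Qed.
Lemma ImB (x y : R[i]) : complex.Im (x - y) = complex.Im x - complex.Im y.
Proof. by case: x; case: y. Qed.
Lemma Re_sum I (r : seq I) (Pr : pred I) (F : I -> R[i]) :
  complex.Re (\sum_(k <- r | Pr k) F k) = \sum_(k <- r | Pr k) complex.Re (F k).
Proof. by apply: (big_morph _ ReD). Qed.
Lemma Im_sum I (r : seq I) (Pr : pred I) (F : I -> R[i]) :
  complex.Im (\sum_(k <- r | Pr k) F k) = \sum_(k <- r | Pr k) complex.Im (F k).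
Proof. by apply: (big_morph _ ImD). Qed.
Lemma ReMr (w : R[i]) (r : R) : complex.Re (w * r%:C) = complex.Re w * r.
Proof. case: w => x y; have -> : complex.Re ((x +i* y) * r%:C) = x * r - y * 0 by []. by rewrite mulr0 subr0. Qed.
Lemma ImMr (w : R[i]) (r : R) : complex.Im (w * r%:C) = complex.Im w * r.
Proof. case: w => x y; have -> : complex.Im ((x +i* y) * r%:C) = x * 0 + y * r by []. by rewrite mulr0 add0r. Qed.
Lemma z2 (t : R) : ('i * t%:C)^+2 = (- t^+2)%:C :> R[i].
Proof. by rewrite exprMn sqr_i -rmorphXn mulN1r rmorphN. Qed.
Lemma zpow_even (t : R) m : ('i * t%:C)^+(m.*2) = ((-1)^+m * t^+(m.*2))%:C :> R[i].
Proof. rewrite -muln2 mulnC exprM z2 -rmorphXn; congr (_%:C); by rewrite [LHS]exprNn -exprM. Qed.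
Lemma zpow_odd (t : R) m : ('i * t%:C)^+(m.*2.+1) = 0 +i* ((-1)^+m * t^+(m.*2.+1)) :> R[i].
Proof.
rewrite exprS zpow_even.
have H (u v : R) : 'i * u%:C * v%:C = 0 +i* (u * v).
  have -> : 'i * u%:C * v%:C = ((0 * u - 1 * 0) * v - (0 * 0 + 1 * u) * 0) +i* ((0 * u - 1 * 0) * 0 + (0 * 0 + 1 * u) * v) by [].
  congr (_ +i* _); ring.
rewrite H exprS; congr (_ +i* _); ring.
Qed.
Lemma Re_zpow (t : R) k : complex.Re (('i * t%:C)^+k) = (~~ odd k)%:R * (-1)^+(k./2) * t^+k.
Proof.
move: (odd_double_half k); set m := k./2; case: (odd k) => <-.
  by rewrite -[(true + _)%N]/(m.*2.+1) zpow_odd /= !mul0r.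
by rewrite -[(false + _)%N]/(m.*2) zpow_even /= mul1r.
Qed.
Lemma Im_zpow (t : R) k : complex.Im (('i * t%:C)^+k) = (odd k)%:R * (-1)^+(k.-1./2) * t^+k.
Proof.
move: (odd_double_half k); set m := k./2; case: (odd k) => <-.
  by rewrite -[(true + _)%N]/(m.*2.+1) zpow_odd /= mul1r doubleK.
by rewrite -[(false + _)%N]/(m.*2) zpow_even /= !mul0r.
Qed.
Lemma CMr (p q r : R) : (p +i* q) * r%:C = (p * r) +i* (q * r).
Proof.
have -> : (p +i* q) * r%:C = (p * r - q * 0) +i* (p * 0 + q * r) by [].
by rewrite !mulr0 subr0 add0r.
Qed.
Lemma tail_bound (g D : R ^nat) : (forall k, 0 <= D k) -> cvgn (series D) ->
  (forall k, (2 <= k)%N -> `|g k| <= D k) -> cvgn (series g) ->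
  `|limn (series g) - series g 2%N| <= limn (series D).
Proof.
move=> D0 cD gD cg.
have key : forall N, (2 <= N)%N -> `|series g N - series g 2%N| <= limn (series D).
  move=> N N2.
  have -> : series g N - series g 2%N = \sum_(2 <= k < N) g k.
    by rewrite /series /= (big_cat_nat (leq0n 2) N2) /= addrAC subrr add0r.
  apply: le_trans (ler_norm_sum _ _ _) _.
  apply: (@le_trans _ _ (\sum_(2 <= k < N) D k)).
    by apply: ler_sum_nat => k /andP[k2 _]; exact: gD.
  apply: (@le_trans _ _ (series D N)).
    rewrite /series /= (big_cat_nat (leq0n 2) N2) /= lerDr.
    by apply: sumr_ge0 => k _.
  apply: nondecreasing_cvgn_le => //.
  by apply: nondecreasing_series => k _ _; exact: D0.
rewrite ler_distl; apply/andP; split.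
  apply: limr_ge => //; near=> N.
  have : `|series g N - series g 2%N| <= limn (series D) by apply: key; near: N; exact: nbhs_infty_ge.
  by rewrite ler_distl => /andP[].
apply: limr_le => //; near=> N.
have : `|series g N - series g 2%N| <= limn (series D) by apply: key; near: N; exact: nbhs_infty_ge.
by rewrite ler_distl => /andP[].
Unshelve. all: by end_near. Qed.
End Cx.

Section Mat.
Variable R : realType.
Variable n : nat.
Variable adj : rel 'I_n.
Local Open Scope complex_scope.
Local Notation L := (laplacian R adj).
Definition P k := mxpow L k.

Lemma mxpowS (T : pzRingType) m (M : 'M[T]_m) k : mxpow M k.+1 = M *m mxpow M k.
Proof. by []. Qed.

Lemma mxpow_entry (z : R[i]) k i j :
  mxpow (z *: map_mx (fun x : R => x%:C) L) k i j = z ^+ k * (P k i j)%:C.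
Proof.
elim: k i j => [|k IH] i j.
  by rewrite /P /= !mxE expr0 mul1r rmorph_nat.
rewrite mxpowS /P mxpowS !mxE rmorph_sum mulr_sumr; apply: eq_bigr => l _.
by rewrite IH !mxE rmorphM exprS; ring.
Qed.

Lemma expm_partial_entry (z : R[i]) N i j :
  expm_partial (z *: map_mx (fun x : R => x%:C) L) N i j
  = \sum_(k < N) z ^+ k * (P k i j / (k`!)%:R)%:C.
Proof.
rewrite /expm_partial summxE; apply: eq_bigr => k _.
rewrite mxE mxpow_entry rmorphM fmorphV rmorph_nat; ring.
Qed.

Definition fre (t : R) i j k := complex.Re (('i * t%:C)^+k) * (P k i j / (k`!)%:R).
Definition fim (t : R) i j k := complex.Im (('i * t%:C)^+k) * (P k i j / (k`!)%:R).

Lemma transition_entry t i j : transition adj t i j =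
  limn (series (fre t i j)) +i* limn (series (fim t i j)).
Proof.
rewrite /transition /expm mxE; congr (_ +i* _).
  congr (lim _); f_equal; apply/funext => N.
  by rewrite expm_partial_entry Re_sum /series /= big_mkord; apply: eq_bigr => k _; rewrite ReMr.
congr (lim _); f_equal; apply/funext => N.
by rewrite expm_partial_entry Im_sum /series /= big_mkord; apply: eq_bigr => k _; rewrite ImMr.
Qed.

Definition cL := \sum_(i0 : 'I_n) \sum_(l : 'I_n) `|L i0 l|.
Lemma cL_ge0 : 0 <= cL.
Proof. by apply: sumr_ge0 => i _; apply: sumr_ge0. Qed.
Lemma row_le i : \sum_l `|L i l| <= cL.
Proof. by rewrite /cL [leRHS](bigD1 i) //= lerDl; apply: sumr_ge0 => *; apply: sumr_ge0. Qed.
Lemma P_bound k i j : `|P k i j| <= cL ^+ k.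
Proof.
elim: k i j => [|k IH] i j.
  by rewrite /P /= mxE expr0; case: (i == j); rewrite ?mulr1n ?mulr0n ?normr1 ?normr0.
rewrite /P mxpowS mxE exprS.
apply: le_trans (ler_norm_sum _ _ _) _.
apply: (@le_trans _ _ (\sum_l `|L i l| * cL ^+ k)).
  by apply: ler_sum => l _; rewrite normrM; apply: ler_wpM2l => //; exact: IH.
by rewrite -mulr_suml; apply: ler_wpM2r; [exact: exprn_ge0 cL_ge0 | exact: row_le].
Qed.

Lemma Re_bound (t : R) k : 0 <= t -> `|complex.Re (('i * t%:C)^+k)| <= t ^+ k.
Proof.
move=> t0; rewrite Re_zpow !normrM normrX normrN1 expr1n mulr1 (ger0_norm (exprn_ge0 _ t0)).
by case: odd; rewrite /= ?normr1 ?normr0 ?mul1r ?mul0r ?exprn_ge0.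
Qed.
Lemma Im_bound (t : R) k : 0 <= t -> `|complex.Im (('i * t%:C)^+k)| <= t ^+ k.
Proof.
move=> t0; rewrite Im_zpow !normrM normrX normrN1 expr1n mulr1 (ger0_norm (exprn_ge0 _ t0)).
by case: odd; rewrite /= ?normr1 ?normr0 ?mul1r ?mul0r ?exprn_ge0.
Qed.

Lemma cvg_dom (u : R ^nat) (A s : R) : 0 <= A -> 0 <= s ->
  (forall k, `|u k| <= A * exp_coeff s k) -> cvgn (series u).
Proof.
move=> A0 s0 hu; apply: normed_cvg.
have h : cvgn (series (A *: exp_coeff s)) by apply: is_cvg_seriesZ; exact: is_cvg_series_exp_coeff.
apply: (series_le_cvg _ _ _ h) => k /=.
- exact: normr_ge0.
- by rewrite mulr_ge0 // exp_coeff_ge0.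
- exact: hu.
Qed.

Lemma fre_bound t i j k : 0 <= t -> `|fre t i j k| <= 1 * exp_coeff (t * cL) k.
Proof.
move=> t0; rewrite mul1r /fre /exp_coeff /= [(t * cL)^+k]exprMn normrM -mulrA; apply: ler_pM => //.
  exact: Re_bound.
rewrite normrM normfV normr_nat; apply: ler_wpM2r; first by rewrite invr_ge0.
exact: P_bound.
Qed.
Lemma fim_bound t i j k : 0 <= t -> `|fim t i j k| <= 1 * exp_coeff (t * cL) k.
Proof.
move=> t0; rewrite mul1r /fim /exp_coeff /= [(t * cL)^+k]exprMn normrM -mulrA; apply: ler_pM => //.
  exact: Im_bound.
rewrite normrM normfV normr_nat; apply: ler_wpM2r; first by rewrite invr_ge0.
exact: P_bound.
Qed.
Lemma cvg_fre t i j : 0 <= t -> cvgn (series (fre t i j)).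
Proof. move=> t0; apply: (cvg_dom (A:=1) (s:=t * cL)) => //; [exact: mulr_ge0 t0 cL_ge0|move=> k; exact: fre_bound]. Qed.
Lemma cvg_fim t i j : 0 <= t -> cvgn (series (fim t i j)).
Proof. move=> t0; apply: (cvg_dom (A:=1) (s:=t * cL)) => //; [exact: mulr_ge0 t0 cL_ge0|move=> k; exact: fim_bound]. Qed.

End Mat.

Section Dir.
Variable R : realType.
Variable n : nat.
Variable adj : rel 'I_n.
Hypothesis hG : simple_graph adj.
Variables a b : 'I_n.
Hypothesis hab : a != b.
Local Open Scope complex_scope.
Local Notation L := (laplacian R adj).

Lemma mul_v (T : pzRingType) (A : 'M[T]_n) x :
  (A *m (delta_mx a 0 - delta_mx b 0 : 'cV[T]_n)) x 0 = A x a - A x b.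
Proof. by rewrite mulmxBr -!colE !mxE. Qed.

Lemma L_entry x y : L x y = (x == y)%:R * #|nbhd adj x|%:R - (adj x y)%:R.
Proof. by rewrite /laplacian /deg_mx /adj_mx !mxE; case: (x == y); rewrite ?mul1r ?mul0r. Qed.

Definition lam : R := (#|nbhd adj a| + adj a b)%:R.

Lemma Lv (tw : twins adj a b) :
  L *m (delta_mx a 0 - delta_mx b 0 : 'cV[R]_n) = lam *: (delta_mx a 0 - delta_mx b 0).
Proof.
case: hG => sym irr.
apply/matrixP => x y; rewrite (ord1 y) mul_v !L_entry !mxE /lam eqxx !andbT.
have dab : #|nbhd adj a| = #|nbhd adj b|.
  rewrite (cardsD1 b) [RHS](cardsD1 a) tw !inE sym //.
have [-> | xa] := eqVneq x a.
  rewrite (negbTE hab) irr natrD /=; ring.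
have [-> | xb] := eqVneq x b.
  rewrite irr sym -dab natrD /=; ring.
have : (x \in nbhd adj a :\ b) = (x \in nbhd adj b :\ a) by rewrite tw.
rewrite !inE xa xb /= => h.
rewrite sym h sym; ring.
Qed.
Lemma Pv (tw : twins adj a b) k :
  P R adj k *m (delta_mx a 0 - delta_mx b 0 : 'cV[R]_n) = lam ^+ k *: (delta_mx a 0 - delta_mx b 0).
Proof.
elim: k => [|k IH]; first by rewrite /P /= mul1mx expr0 scale1r.
by rewrite /P mxpowS -mulmxA -/(P R adj k) IH -scalemxAr Lv // scalerA exprSr.
Qed.

Lemma Pentry (tw : twins adj a b) k x :
  P R adj k x a - P R adj k x b = lam ^+ k * ((x == a)%:R - (x == b)%:R).
Proof.
have := congr1 (fun M : 'cV[R]_n => M x 0) (Pv tw k); rewrite /= mul_v => ->.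
by rewrite !mxE eqxx !andbT.
Qed.

Lemma CB (p q r s : R) : (p +i* q) - (r +i* s) = (p - r) +i* (q - s).
Proof. by []. Qed.

Lemma dir2 (tw : twins adj a b) : pair_fixed R adj a b.
Proof.
move=> t t0.
set s := t * lam.
exists (cos s +i* sin s); split; first exact: cos2Dsin2.
apply/matrixP => x y; rewrite (ord1 y) /evec mul_v [RHS]mxE.
set w : R := (x == a)%:R - (x == b)%:R.
have -> : (delta_mx a 0 - delta_mx b 0 : 'cV[R[i]]_n) x 0 = w%:C.
  by rewrite !mxE eqxx !andbT rmorphB !rmorph_nat.
rewrite !transition_entry CB CMr; congr (_ +i* _).
- rewrite -lim_seriesB; [|by apply: cvg_fre|by apply: cvg_fre].
  have -> : fre adj t x a - fre adj t x b = w *: cos_coeff s.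
    apply/funext => k; change (fre adj t x a k - fre adj t x b k = w * cos_coeff s k).
    rewrite /fre -mulrBr -mulrBl Pentry // Re_zpow /cos_coeff /s /w /= -exprnP exprMn; ring.
  have -> : cos s = limn (series (cos_coeff s)) by rewrite unlock.
  rewrite lim_seriesZ; last exact: is_cvg_series_cos_coeff.
  by rewrite [RHS]mulrC.
- rewrite -lim_seriesB; [|by apply: cvg_fim|by apply: cvg_fim].
  have -> : fim adj t x a - fim adj t x b = w *: sin_coeff s.
    apply/funext => k; change (fim adj t x a k - fim adj t x b k = w * sin_coeff s k).
    rewrite /fim -mulrBr -mulrBl Pentry // Im_zpow /sin_coeff /s /w /= exprMn; ring.
  have -> : sin s = limn (series (sin_coeff s)) by rewrite unlock.
  rewrite lim_seriesZ; last exact: is_cvg_series_sin_coeff.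
  by rewrite [RHS]mulrC.
Qed.
Lemma im_zero (t : R) x : 0 <= t -> x != a -> x != b -> pair_fixed R adj a b ->
  limn (series (fim adj t x a - fim adj t x b)) = 0.
Proof.
move=> t0 xa xb fx.
have [g [_ H]] := fx t t0.
have := congr1 (fun M : 'cV[R[i]]_n => M x 0) H.
rewrite /= /evec mul_v [RHS]mxE.
have -> : (delta_mx a 0 - delta_mx b 0 : 'cV[R[i]]_n) x 0 = 0.
  by rewrite !mxE (negbTE xa) (negbTE xb) subrr.
rewrite mulr0 !transition_entry CB => /(congr1 (@complex.Im R)) /= E.
rewrite lim_seriesB; [exact: E|by apply: cvg_fim|by apply: cvg_fim].
Qed.

Lemma g_bound (t : R) x k : 0 <= t -> t <= 1 -> (2 <= k)%N ->
  `|(fim adj t x a - fim adj t x b) k| <= (t ^+ 2 *: ((2 : R) *: exp_coeff (cL R adj))) k.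
Proof.
move=> t0 t1 k2.
change (`|fim adj t x a k - fim adj t x b k| <= t ^+ 2 * (2 * exp_coeff (cL R adj) k)).
rewrite /fim -mulrBr normrM; apply: ler_pM; [exact: normr_ge0|exact: normr_ge0| |].
  apply: le_trans (Im_bound k t0) _.
  rewrite -(subnKC k2) exprD; apply: ler_piMr; [exact: exprn_ge0|exact: exprn_ile1].
rewrite -mulrBl normrM normfV normr_nat /exp_coeff /= mulrA.
apply: ler_wpM2r; first by rewrite invr_ge0.
have h1 : `|P R adj k x a| <= cL R adj ^+ k by apply: P_bound.
have h2 : `|P R adj k x b| <= cL R adj ^+ k by apply: P_bound.
have h3 := ler_normB (P R adj k x a) (P R adj k x b).
lra.
Qed.

Lemma dir1 (fx : pair_fixed R adj a b) : twins adj a b.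
Proof.
case: hG => sym irr.
set E := (2 : R) *: exp_coeff (cL R adj).
have cE : cvgn (series E) by apply: is_cvg_seriesZ; exact: is_cvg_series_exp_coeff.
set K := limn (series E).
have K0 : 0 <= K.
  apply: limr_ge => //; near=> N; apply: sumr_ge0 => k _.
  change (0 <= 2 * exp_coeff (cL R adj) k); apply: mulr_ge0 => //; apply: exp_coeff_ge0; exact: cL_ge0.
have dx : forall x, x != a -> x != b -> adj x a = adj x b.
  move=> x xa xb; apply/eqP; apply: contraT => hne.
  set t := (K + 1)^-1.
  have K1 : 0 < K + 1 by lra.
  have t0 : 0 < t by rewrite invr_gt0.
  have tK : t * (K + 1) = 1 by rewrite mulVf // gt_eqF.
  have t1 : t <= 1 by nra.
  have hb : `|limn (series (fim adj t x a - fim adj t x b)) - series (fim adj t x a - fim adj t x b) 2%N| <= limn (series (t ^+ 2 *: E)).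
    apply: tail_bound.
    - move=> k; change (0 <= t ^+ 2 * (2 * exp_coeff (cL R adj) k)); apply: mulr_ge0; [exact: exprn_ge0 (ltW t0)| apply: mulr_ge0 => //; apply: exp_coeff_ge0; exact: cL_ge0].
    - exact: is_cvg_seriesZ.
    - by move=> k k2; apply: g_bound => //; exact: ltW.
    - by apply: is_cvg_seriesB; apply: cvg_fim; exact: ltW.
  rewrite lim_seriesZ // (im_zero (ltW t0) xa xb fx) in hb.
  have e2 : series (fim adj t x a - fim adj t x b) 2%N = t * ((adj x b)%:R - (adj x a)%:R).
    rewrite /series /= !big_nat_recl // big_geq // addr0.
    change (fim adj t x a 0 - fim adj t x b 0 + (fim adj t x a 1 - fim adj t x b 1) = t * ((adj x b)%:R - (adj x a)%:R)).
    rewrite /fim !Im_zpow /= expr0 expr1 /P /= !mulmx1 !L_entry (negbTE xa) (negbTE xb) /=.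
    rewrite !mul0r subrr add0r !mul1r (_ : 1`!%:R = 1 :> R) // !divr1; ring.
  have hd : `|(adj x b)%:R - (adj x a)%:R : R| = 1.
    by move: hne; case: (adj x a); case: (adj x b) => //= _; rewrite ?subr0 ?sub0r ?normrN normr1.
  move: hb; rewrite e2 sub0r normrN normrM hd (gtr0_norm t0) mulr1 => h.
  have : t <= t ^+ 2 * K by exact: h.
  nra.
apply/setP => x; rewrite !inE.
have [-> | xa] := eqVneq x a; first by rewrite irr andbF.
have [-> | xb] := eqVneq x b; first by rewrite irr andbF.
by rewrite /= sym dx // sym.
Unshelve. all: by end_near.
Qed.

End Dir.

Unset Implicit Arguments.
Theorem mainTheorem9 (R : realType) (n : nat) (adj : rel 'I_n)
  (hG : simple_graph adj) (a b : 'I_n) (hab : a != b) :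
  pair_fixed R adj a b <-> twins adj a b.
Proof.
split; [exact: dir1 | exact: dir2].
Qed.
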